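(* Let $k\ge\ell\ge1$ be integers with $k+\ell\ge6$ and let $G$ be a finite digraph. For every $v\in V(G)$, $$s(v)\le\frac{1}{m+1}\left(\lambda_0\,\rho(v)^m+\lambda_1\,\rho(v)(1-\rho(v))^{m-1}\right).$$
   Context: Put $m=k+\ell$, $\lambda_0=k^k\ell^\ell/m^m$, $\lambda_1=k^k\ell(\ell-1)^{\ell-1}/(m-1)^{m-1}$ (with $0^0=1$). Digraphs are finite, without loops; $xy$ denotes an arc from $x$ to $y$; two vertices are adjacent if at least one of $xy,yx$ is an arc. The oriented star $S_{k,\ell}$ has a center $c$, a set $O$ of $k$ out-leaves and a set $I$ of $\ell$ in-leaves; its arcs are exactly $co$ ($o\in O$) and $ic$ ($i\in I$). For a digraph $G$ on $n$ vertices, let $\phi$ be a uniformly random map from $V(S_{k,\ell})$ to $V(G)$ (all $n^{m+1}$ maps equally likely), and let $\mathcal S$ be the set of maps $\phi$ that are isomorphisms from $S_{k,\ell}$ onto $G[\mathrm{Im}\,\phi]$ (in particular injective). $s(v)=\Pr[\phi\in\mathcal S\mid v\in\mathrm{Im}\,\phi]$. $\rho(v)$ is the number of vertices adjacent to $v$, divided by $n$. *)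

(* Defs.v *)
From mathcomp Require Import all_boot all_order all_algebra.
Set Implicit Arguments. Unset Strict Implicit. Unset Printing Implicit Defensive.
Import Order.TTheory GRing.Theory Num.Theory.

(* Vertices of the oriented star S_{k,l} are 'I_(k+l).+1:
   0 is the center c, 1..k are the k out-leaves (arcs c -> o),
   k+1..k+l are the l in-leaves (arcs i -> c). *)
Definition star_arc (k l : nat) (i j : 'I_(k + l).+1) : bool :=
  ((i == 0 :> nat) && (1 <= j <= k)) || ((j == 0 :> nat) && (k < i)).

(* A digraph is a finite type V with an arc relation; "no loops" is
   assumed as irreflexivity in the theorem. *)
(* phi is an isomorphism from S_{k,l} onto G[Im phi]. *)
Definition is_star_copy (V : finType) (arc : rel V) (k l : nat)
    (phi : {ffun 'I_(k + l).+1 -> V}) : bool :=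
  injectiveb phi && [forall i, forall j, arc (phi i) (phi j) == @star_arc k l i j].

(* s(v) = Pr[phi in S | v in Im phi] for phi uniform over all maps. *)
Definition s_star (R : fieldType) (V : finType) (arc : rel V) (k l : nat)
    (v : V) : R :=
  (#|[set phi : {ffun 'I_(k + l).+1 -> V} | @is_star_copy V arc k l phi && (v \in codom phi)]|%:R)
  / (#|[set phi : {ffun 'I_(k + l).+1 -> V} | v \in codom phi]|%:R).

Definition adjacent (V : finType) (arc : rel V) (x y : V) : bool :=
  arc x y || arc y x.

Definition rho (R : fieldType) (V : finType) (arc : rel V) (v : V) : R :=
  (#|[set u | adjacent arc v u]|%:R) / (#|V|%:R).

(* lambda_0 = k^k l^l / m^m and lambda_1 = k^k l (l-1)^(l-1) / (m-1)^(m-1),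
   with m = k + l and 0^0 = 1 (as for expn). *)
Definition lambda0 (R : fieldType) (k l : nat) : R :=
  ((k ^ k * l ^ l)%N%:R) / (((k + l) ^ (k + l))%N%:R).

Definition lambda1 (R : fieldType) (k l : nat) : R :=
  ((k ^ k * l * (l - 1) ^ (l - 1))%N%:R) / (((k + l - 1) ^ (k + l - 1))%N%:R).

(* Main.v *)
Require Import Defs.
From mathcomp Require Import all_boot all_order all_algebra.
From mathcomp Require Import ring lra zify.
Import Order.TTheory GRing.Theory Num.Theory.
Set Implicit Arguments. Unset Strict Implicit. Unset Printing Implicit Defensive.

Lemma card_le_bigcup (T I : finType) (P : pred I) (A : {set T}) (B : I -> {set T}) :
  A \subset \bigcup_(i | P i) B i -> (#|A| <= \sum_(i | P i) #|B i|)%N.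
Proof.
move=> sAB; apply: leq_trans (subset_leq_card sAB) _.
elim/big_rec2: _ => [|i X n _ H]; first by rewrite cards0.
by apply: leq_trans (leq_card_setU _ _) _; rewrite leq_add2l.
Qed.

Lemma card_setXn_const (I V : finType) (F : I -> {set V}) :
  #|[set x : {ffun I -> V} | [forall i, x i \in F i]]| = (\prod_i #|F i|)%N.
Proof.
rewrite -(cardsXn F); apply: eq_card => x.
by rewrite !inE.
Qed.

Definition io (k l : nat) (i : 'I_k) : 'I_(k + l).+1 := lift ord0 (lshift l i).
Definition ii (k l : nat) (j : 'I_l) : 'I_(k + l).+1 := lift ord0 (rshift k j).

Lemma io_val k l (i : 'I_k) : val (io l i) = i.+1.
Proof. by []. Qed.
Lemma ii_val k l (j : 'I_l) : val (ii k j) = (k + j).+1.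
Proof. by []. Qed.

Lemma idx_cases k l (x : 'I_(k + l).+1) :
  x = ord0 \/ (exists i, x = io l i) \/ (exists j, x = ii k j).
Proof.
case: (unliftP ord0 x) => [y ->|->]; last by left.
right; rewrite -(@splitK k l y); case: (@split k l y) => [i|j] /=.
  by left; exists i.
by right; exists j.
Qed.

Lemma sa_0io k l (i : 'I_k) : star_arc ord0 (io l i).
Proof. by rewrite /star_arc io_val /= ltn_ord. Qed.
Lemma sa_io0 k l (i : 'I_k) : ~~ star_arc (io l i) ord0.
Proof. by rewrite /star_arc io_val /= ltnNge ltn_ord. Qed.
Lemma sa_0ii k l (j : 'I_l) : ~~ star_arc ord0 (ii k j).
Proof. rewrite /star_arc ii_val /=; lia. Qed.
Lemma sa_ii0 k l (j : 'I_l) : star_arc (ii k j) ord0.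
Proof. rewrite /star_arc ii_val /=; lia. Qed.
Lemma sa_leaf k l (x y : 'I_(k + l).+1) : x != ord0 -> y != ord0 -> ~~ star_arc x y.
Proof.
rewrite /star_arc -!(inj_eq val_inj) /= => /negbTE -> /negbTE ->. by [].
Qed.

Definition outS (V : finType) (arc : rel V) (v : V) : {set V} := [set u | arc v u && ~~ arc u v].
Definition inS (V : finType) (arc : rel V) (v : V) : {set V} := [set u | arc u v && ~~ arc v u].
Definition nadj (V : finType) (arc : rel V) (v : V) : {set V} := [set u | ~~ adjacent arc v u && (u != v)].

Lemma copyE (V : finType) (arc : rel V) k l (f : {ffun 'I_(k + l).+1 -> V}) :
  is_star_copy arc f -> injective f /\ forall x y, arc (f x) (f y) = star_arc x y.
Proof.
case/andP => /injectiveP fi /forallP H; split => // x y.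
by have /forallP/(_ y)/eqP := H x.
Qed.

Lemma center_bound (V : finType) (arc : rel V) k l (v : V) :
  (#|[set f : {ffun 'I_(k + l).+1 -> V} | is_star_copy arc f && (f ord0 == v)]|
    <= #|outS arc v| ^_ k * #|inS arc v| ^_ l)%N.
Proof.
set S := [set f : {ffun 'I_(k + l).+1 -> V} | _].
pose pi (f : {ffun 'I_(k + l).+1 -> V}) :=
  ([ffun i : 'I_k => f (io l i)], [ffun j : 'I_l => f (ii k j)]).
have inj : {in S &, injective pi}.
  move=> f g; rewrite !inE => /andP[_ /eqP f0] /andP[_ /eqP g0] [] /ffunP Ho /ffunP Hi.
  apply/ffunP => x; case: (idx_cases x) => [->|[[i ->]|[j ->]]].
  - by rewrite f0 g0.
  - by have := Ho i; rewrite !ffunE.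
  - by have := Hi j; rewrite !ffunE.
rewrite -(card_in_imset inj).
pose A := [set f in ffun_on (fun u => u \in outS arc v) | injectiveb f] : {set {ffun 'I_k -> V}}.
pose B := [set f in ffun_on (fun u => u \in inS arc v) | injectiveb f] : {set {ffun 'I_l -> V}}.
have sub : [set pi f | f in S] \subset setX A B.
  apply/subsetP => y /imsetP[f]; rewrite inE => /andP[cf /eqP f0] {y}->.
  have [fi fa] := copyE cf.
  rewrite !inE /=; apply/andP; split; apply/andP; split.
  - apply/ffun_onP => i; rewrite ffunE !inE -f0 !fa sa_0io /=.
    exact: sa_io0.
  - apply/injectiveP => i j; rewrite !ffunE => /fi /(congr1 val).
    by rewrite !io_val => -[] /val_inj.
  - apply/ffun_onP => j; rewrite ffunE !inE -f0 !fa sa_ii0 /=.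
    exact: sa_0ii.
  - apply/injectiveP => i j; rewrite !ffunE => /fi /(congr1 val).
    by rewrite !ii_val => /eqP; rewrite eqSS eqn_add2l => /eqP /val_inj.
apply: leq_trans (subset_leq_card sub) _.
rewrite cardsX !card_inj_ffuns_on !card_ord.
by rewrite (eq_card (fun u => _ : (u \in outS arc v) = (u \in outS arc v))) //.
Qed.

Definition Gset (V : finType) k l (p : 'I_(k + l).+1) (c v : V) (Fo Fi : {set V})
  (x : 'I_(k + l).+1) : {set V} :=
  if x == ord0 then [set c] else if x == p then [set v] else
  if (x <= k)%N then Fo else Fi.

Lemma leaf_count (V : finType) (arc : rel V) k l (v : V) (p : 'I_(k + l).+1)
  (C : {set V}) (Fo Fi : V -> {set V}) :
  (forall f : {ffun 'I_(k + l).+1 -> V}, is_star_copy arc f -> f p = v ->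
     f ord0 \in C /\ forall x, x != ord0 -> x != p ->
       f x \in (if (x <= k)%N then Fo (f ord0) else Fi (f ord0))) ->
  (#|[set f : {ffun 'I_(k + l).+1 -> V} | is_star_copy arc f && (f p == v)]|
    <= \sum_(c in C) \prod_x #|Gset p c v (Fo c) (Fi c) x|)%N.
Proof.
move=> H.
pose B c := [set f : {ffun 'I_(k + l).+1 -> V} | [forall x, f x \in Gset p c v (Fo c) (Fi c) x]].
apply: leq_trans (card_le_bigcup (P := [in C]) (B := B) _) _.
  apply/subsetP => f; rewrite inE => /andP[cf /eqP fp].
  have [fC fx] := H f cf fp.
  apply/bigcupP; exists (f ord0) => //.
  rewrite inE; apply/forallP => x; rewrite /Gset.
  case: eqP => [->|/eqP x0]; first by rewrite inE.
  case: eqP => [->|/eqP xp]; first by rewrite inE fp.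
  exact: fx.
by apply: leq_sum => c _; rewrite card_setXn_const.
Qed.

Lemma prod_io (V : finType) k l (q : 'I_k) (c v : V) (Fo Fi : {set V}) :
  (\prod_x #|Gset (io l q) c v Fo Fi x| = #|Fo| ^ k.-1 * #|Fi| ^ l)%N.
Proof.
rewrite big_ord_recl /Gset eqxx cards1 mul1n big_split_ord /=.
congr (_ * _)%N.
  rewrite (eq_bigr (fun i => if i == q then 1 else #|Fo|)%N); last first.
    move=> i _; have -> : (lift ord0 (lshift l i) == io l q) = (i == q).
      by rewrite -(inj_eq val_inj) /= /bump /= !add1n eqSS.
    by case: ifP => _; [rewrite cards1 | rewrite /bump /= add1n ltn_ord].
  rewrite (bigD1 q) //= eqxx mul1n.
  rewrite (eq_bigr (fun _ => #|Fo|)); last by move=> i /negbTE ->.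
  rewrite (prod_nat_const (fun i => i != q)).
  by congr (_ ^ _); rewrite (cardC1 q) card_ord.
rewrite (eq_bigr (fun _ => #|Fi|)); last first.
  move=> i _; have -> : (lift ord0 (rshift k i) == io l q) = false.
    by apply/negbTE; rewrite -(inj_eq val_inj) /= /bump /= !add1n eqSS; apply/eqP => /= E; have := ltn_ord q; lia.
  by rewrite /bump /= add1n ltnNge leq_addr.
by rewrite prod_nat_const card_ord.
Qed.

Lemma prod_ii (V : finType) k l (q : 'I_l) (c v : V) (Fo Fi : {set V}) :
  (\prod_x #|Gset (ii k q) c v Fo Fi x| = #|Fo| ^ k * #|Fi| ^ l.-1)%N.
Proof.
rewrite big_ord_recl /Gset eqxx cards1 mul1n big_split_ord /=.
congr (_ * _)%N.
  rewrite (eq_bigr (fun _ => #|Fo|)); last first.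
    move=> i _; have -> : (lift ord0 (lshift l i) == ii k q) = false.
      by apply/negbTE; rewrite -(inj_eq val_inj) /= /bump /= !add1n eqSS; apply/eqP => /= E; have := ltn_ord i; lia.
    by rewrite /bump /= add1n ltn_ord.
  by rewrite prod_nat_const card_ord.
rewrite (eq_bigr (fun i => if i == q then 1 else #|Fi|)%N); last first.
  move=> i _; have -> : (lift ord0 (rshift k i) == ii k q) = (i == q).
    by rewrite -(inj_eq val_inj) /= /bump /= !add1n eqSS eqn_add2l.
  by case: ifP => _; [rewrite cards1 | rewrite /bump /= add1n ltnNge leq_addr].
rewrite (bigD1 q) //= eqxx mul1n.
rewrite (eq_bigr (fun _ => #|Fi|)); last by move=> i /negbTE ->.
rewrite (prod_nat_const (fun i => i != q)).
by congr (_ ^ _); rewrite (cardC1 q) card_ord.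
Qed.

Lemma leaf_prop (V : finType) (arc : rel V) k l (f : {ffun 'I_(k + l).+1 -> V})
  (p x : 'I_(k + l).+1) : is_star_copy arc f -> p != ord0 -> x != ord0 -> x != p ->
  f x \in nadj arc (f p) :&: (if (x <= k)%N then outS arc (f ord0) else inS arc (f ord0)).
Proof.
move=> cf p0 x0 xp; have [fi fa] := copyE cf.
rewrite !inE /adjacent !fa !(negbTE (sa_leaf _ _)) //=.
rewrite (inj_eq fi) xp /=.
case: (idx_cases x) => [E|[[i E]|[j E]]]; first by rewrite E eqxx in x0.
- by rewrite E io_val ltn_ord !inE !fa sa_0io (negbTE (sa_io0 _ _)).
- rewrite E ii_val ltnNge leq_addr /= !inE !fa sa_ii0.
  by rewrite (negbTE (sa_0ii _ _)).
Qed.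

Lemma out_leaf_bound (V : finType) (arc : rel V) k l (v : V) (q : 'I_k) :
  (#|[set f : {ffun 'I_(k + l).+1 -> V} | is_star_copy arc f && (f (io l q) == v)]|
    <= \sum_(c in inS arc v) #|nadj arc v :&: outS arc c| ^ k.-1 * #|nadj arc v :&: inS arc c| ^ l)%N.
Proof.
apply: leq_trans (leaf_count (C := inS arc v) (Fo := fun c => nadj arc v :&: outS arc c)
  (Fi := fun c => nadj arc v :&: inS arc c) _) _.
  move=> f cf fp; have [fi fa] := copyE cf.
  have p0 : io l q != ord0 by rewrite -(inj_eq val_inj) io_val.
  split.
    by rewrite !inE -fp !fa sa_0io (negbTE (sa_io0 _ _)).
  move=> x x0 xp; have := leaf_prop cf p0 x0 xp.
  by rewrite fp; case: ifP => _; rewrite !inE => /andP[-> ->].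
by apply: leq_sum => c _; rewrite prod_io.
Qed.

Lemma in_leaf_bound (V : finType) (arc : rel V) k l (v : V) (q : 'I_l) :
  (#|[set f : {ffun 'I_(k + l).+1 -> V} | is_star_copy arc f && (f (ii k q) == v)]|
    <= \sum_(c in outS arc v) #|nadj arc v :&: outS arc c| ^ k * #|nadj arc v :&: inS arc c| ^ l.-1)%N.
Proof.
apply: leq_trans (leaf_count (C := outS arc v) (Fo := fun c => nadj arc v :&: outS arc c)
  (Fi := fun c => nadj arc v :&: inS arc c) _) _.
  move=> f cf fp; have [fi fa] := copyE cf.
  have p0 : ii k q != ord0 by rewrite -(inj_eq val_inj) ii_val.
  split.
    by rewrite !inE -fp !fa sa_ii0 (negbTE (sa_0ii _ _)).
  move=> x x0 xp; have := leaf_prop cf p0 x0 xp.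
  by rewrite fp; case: ifP => _; rewrite !inE => /andP[-> ->].
by apply: leq_sum => c _; rewrite prod_ii.
Qed.

Lemma T_nat (V : finType) (arc : rel V) k l (v : V) :
  (#|[set f : {ffun 'I_(k + l).+1 -> V} | is_star_copy arc f && (v \in codom f)]| <=
   #|outS arc v| ^_ k * #|inS arc v| ^_ l
   + k * (\sum_(c in inS arc v) #|nadj arc v :&: outS arc c| ^ k.-1 * #|nadj arc v :&: inS arc c| ^ l)
   + l * (\sum_(c in outS arc v) #|nadj arc v :&: outS arc c| ^ k * #|nadj arc v :&: inS arc c| ^ l.-1))%N.
Proof.
pose B (p : 'I_(k + l).+1) := [set f : {ffun 'I_(k + l).+1 -> V} | is_star_copy arc f && (f p == v)].
apply: leq_trans (card_le_bigcup (P := predT) (B := B) _) _.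
  apply/subsetP => f; rewrite inE => /andP[cf /codomP[p vp]].
  by apply/bigcupP; exists p => //; rewrite inE cf vp eqxx.
rewrite big_ord_recl big_split_ord /= -addnA leq_add ?center_bound //.
apply: leq_add.
  rewrite -[X in (_ <= X * _)%N](card_ord k) -sum_nat_const.
  by apply: leq_sum => q _; apply: out_leaf_bound.
rewrite -[X in (_ <= X * _)%N](card_ord l) -sum_nat_const.
by apply: leq_sum => q _; apply: in_leaf_bound.
Qed.

Lemma card_disj_le (T : finType) (A B C : {set T}) :
  [disjoint A & B] -> A \subset C -> B \subset C -> (#|A| + #|B| <= #|C|)%N.
Proof.
move=> dAB sA sB; rewrite -cardsUI (_ : A :&: B = set0) ?cards0 ?addn0.
  by apply: subset_leq_card; rewrite subUset sA sB.
by apply/eqP; rewrite setI_eq0.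
Qed.

Lemma out_in_adj (V : finType) (arc : rel V) (v : V) :
  (#|outS arc v| + #|inS arc v| <= #|[set u | adjacent arc v u]|)%N.
Proof.
apply: card_disj_le.
- rewrite -setI_eq0; apply/eqP/setP => u; rewrite !inE.
  by apply/negbTE/negP => /andP[/andP[a b] /andP[c d]]; rewrite c in b.
- by apply/subsetP => u; rewrite !inE /adjacent => /andP[-> _].
- by apply/subsetP => u; rewrite !inE /adjacent => /andP[-> _]; rewrite orbT.
Qed.

Lemma nadj_split (V : finType) (arc : rel V) (v c : V) :
  (#|nadj arc v :&: outS arc c| + #|nadj arc v :&: inS arc c| <= #|nadj arc v|)%N.
Proof.
apply: card_disj_le.
- rewrite -setI_eq0; apply/eqP/setP => u; rewrite !inE.
  by apply/negbTE/negP => /and4P[/and3P[_ _ hb] _ hc _]; rewrite hc in hb.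
- by apply/subsetP => u; rewrite inE => /andP[].
- by apply/subsetP => u; rewrite inE => /andP[].
Qed.

Lemma card_adj_nadj (V : finType) (arc : rel V) (v : V) : irreflexive arc ->
  (#|[set u | adjacent arc v u]| + #|nadj arc v|).+1 = #|V|.
Proof.
move=> irr.
have e : nadj arc v = ~: ([set u | adjacent arc v u] :|: [set v]).
  apply/setP => u; rewrite !inE negb_or.
  by [].
rewrite e -(cardsC ([set u | adjacent arc v u] :|: [set v])) cardsU.
rewrite (_ : [set u | adjacent arc v u] :&: [set v] = set0) ?cards0 ?subn0 ?cards1.
  by rewrite addn1 addSn.
apply/setP => u; rewrite !inE; case: eqP => [->|]; last by rewrite andbF.
by rewrite /adjacent irr.
Qed.

Lemma card_codom (V : finType) (I : finType) (v : V) :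
  #|[set f : {ffun I -> V} | v \in codom f]| = (#|V| ^ #|I| - #|V|.-1 ^ #|I|)%N.
Proof.
rewrite cardsCs card_ffun.
congr (_ - _)%N.
rewrite -(cardC1 v) -card_ffun_on; apply: eq_card => f.
rewrite !inE; apply/idP/ffun_onP.
  by move=> nf x; rewrite !inE; apply: contra nf => /eqP <-; apply: codom_f.
by move=> H; apply/codomP => -[x E]; have := H x; rewrite !inE E eqxx.
Qed.
Lemma leq_expn2r (a b e : nat) : a <= b -> a ^ e <= b ^ e.
Proof. by move=> ab; elim: e => // e IH; rewrite !expnS leq_mul. Qed.

Lemma ffact_le (n m : nat) : n ^_ m <= n ^ m.
Proof.
elim: m n => // m IH n; rewrite ffactnS expnS leq_mul2l.
by apply/orP; right; exact: leq_trans (IH _) (leq_expn2r m (leq_pred n)).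
Qed.

Lemma ffact_bound (a j : nat) : a ^_ j.+3 <= (a - 1) ^ j.+3.
Proof.
case: a => [|b]; first by rewrite ffactnS mul0n.
rewrite subn1 /= ffactnS /= ffactnS ffactnS.
have h1 : (b.-1).-1 ^_ j <= b ^ j.
  exact: leq_trans (ffact_le _ _) (leq_expn2r j (leq_trans (leq_pred _) (leq_pred _))).
apply: (@leq_trans (b.+1 * (b * (b.-1 * b ^ j)))).
  by rewrite leq_mul2l leq_mul2l leq_mul2l h1 !orbT.
rewrite !expnS !mulnA leq_mul2r; apply/orP; right.
clear h1; case: b => // b /=; nia.
Qed.

Local Open Scope ring_scope.

Lemma AM (R : realFieldType) (p q : nat) (x y : R) : (0 < p)%N -> 0 <= x -> 0 <= y ->
  x ^+ p * y ^+ q <= (p ^ p * q ^ q)%N%:R / ((p + q) ^ (p + q))%N%:R * (x + y) ^+ (p + q).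
Proof.
move=> p0 x0 y0.
have pR : (p%:R : R) != 0 by rewrite pnatr_eq0; case: (p) p0.
case: q => [|q].
  rewrite expr0 mulr1 expn0 muln1 addn0 divff; last by rewrite pnatr_eq0 expn_eq0; case: (p) p0.
  by rewrite mul1r lerXn2r // ?nnegrE ?addr_ge0 // lerDl.
have qR : (q.+1%:R : R) != 0 by rewrite pnatr_eq0.
pose E (i : 'I_(p + q.+1)) := if (i < p)%N then x / p%:R else y / q.+1%:R.
have H : {in predT, forall i, 0 <= E i}.
  by move=> i _; rewrite /E; case: ifP => _; apply: divr_ge0.
have := Order.le_of_leif (@leif_AGM R _ predT E H).
have cardA : #|predT : {pred 'I_(p + q.+1)}| = (p + q.+1)%N by rewrite cardT size_enum_ord.
rewrite /= cardA.
have -> : \prod_(i in predT) E i = \prod_(i < p + q.+1) E i by apply: eq_bigl.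
have -> : \sum_(i in predT) E i = \sum_(i < p + q.+1) E i by apply: eq_bigl.
rewrite big_split_ord /= big_split_ord /=.
have E1 (i : 'I_p) : E (lshift q.+1 i) = x / p%:R by rewrite /E /= ltn_ord.
have E2 (i : 'I_q.+1) : E (rshift p i) = y / q.+1%:R by rewrite /E /= ltnNge leq_addr.
rewrite (eq_bigr _ (fun i _ => E1 i)) (eq_bigr _ (fun i _ => E2 i)).
rewrite (eq_bigr _ (fun i _ => E1 i)) (eq_bigr _ (fun i _ => E2 i)).
rewrite !prodr_const !sumr_const !card_ord -[(x / _) *+ p]mulr_natr -[(y / _) *+ q.+1]mulr_natr. rewrite !divfK // !expr_div_n => {}H.
have P0 : 0 < (p%:R : R) ^+ p by rewrite exprn_gt0 // ltr0n.
have Q0 : 0 < (q.+1%:R : R) ^+ q.+1 by rewrite exprn_gt0 // ltr0n.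
have S0 : 0 < ((p + q.+1)%:R : R) by rewrite ltr0n addnS.
have -> : x ^+ p * y ^+ q.+1 = (x ^+ p / p%:R ^+ p * (y ^+ q.+1 / q.+1%:R ^+ q.+1)) * (p%:R ^+ p * q.+1%:R ^+ q.+1).
  by field; rewrite !expf_neq0.
apply: le_trans (ler_wpM2r _ H) _; first by apply: mulr_ge0; apply: ltW.
rewrite natrM !natrX le_eqVlt; apply/orP; left; apply/eqP.
by field; rewrite expf_neq0 // gt_eqF.
Qed.

Lemma geomlb (R : realFieldType) (x : R) (j : nat) : 0 <= x ->
  (j.+3)%:R * (x + 1) * x ^+ j.+1 <= (x + 1) ^+ j.+3 - x ^+ j.+3.
Proof.
move=> x0; elim: j => [|j IH].
  rewrite !exprS !expr0; nra.
have J0 : 0 <= (j%:R : R) by rewrite ler0n.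
have e3 : ((j.+3)%:R : R) = j%:R + 3 by rewrite !mulrS; ring.
have e4 : ((j.+4)%:R : R) = j%:R + 4 by rewrite !mulrS; ring.
rewrite e4; rewrite e3 in IH.
set D := (x + 1) ^+ j.+3 - x ^+ j.+3 in IH.
set t := x ^+ j.+1 in IH *.
have t0 : 0 <= t by rewrite exprn_ge0.
have -> : (x + 1) ^+ j.+4 - x ^+ j.+4 = (x + 1) * D + x * x * t.
  by rewrite /D /t !exprS; ring.
have x1 : 0 <= x + 1 by lra.
have H2 := ler_wpM2l x1 IH.
have h3 : 0 <= t * ((j%:R + 2) * x + j%:R + 3) by apply: mulr_ge0 => //; nra.
have -> : x ^+ j.+2 = x * t by rewrite /t exprS.
have E : (x + 1) * D + x * x * t - (j%:R + 4) * (x + 1) * (x * t) =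
  ((x + 1) * D - (x + 1) * ((j%:R + 3) * (x + 1) * t)) + t * ((j%:R + 2) * x + j%:R + 3) by ring.
rewrite -subr_ge0 E; apply: addr_ge0 => //; rewrite subr_ge0 //.
Qed.

Lemma bern (R : realFieldType) (y : R) (n : nat) : 1 <= y ->
  y ^+ n.+1 <= (y - 1) ^+ n.+1 + n.+1%:R * y ^+ n.
Proof.
move=> y1; elim: n => [|n IH]; first by rewrite !expr1 expr0; lra.
have y0 : 0 <= y by lra.
have a : (y - 1) ^+ n.+1 <= y ^+ n.+1 by rewrite lerXn2r ?nnegrE; lra.
have e1 : ((n.+1)%:R : R) = n%:R + 1 by rewrite !mulrS; ring.
have e2 : ((n.+2)%:R : R) = n%:R + 2 by rewrite !mulrS; ring.
rewrite e2; rewrite e1 in IH.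
set u := (y - 1) ^+ n.+1 in IH a.
have H := ler_wpM2l y0 IH.
have -> : (y - 1) ^+ n.+2 = (y - 1) * u by rewrite /u exprS.
have -> : y ^+ n.+2 = y * y ^+ n.+1 by rewrite exprS.
set s1 := y ^+ n.+1 in IH H a *.
have E : (y - 1) * u + (n%:R + 2) * s1 - y * s1 = (y * u + y * ((n%:R + 1) * y ^+ n) - y * s1) + (s1 - u)
  by rewrite /s1 exprS; ring.
rewrite -subr_ge0 E; apply: addr_ge0; rewrite subr_ge0 //.
by rewrite -mulrDr.
Qed.

Lemma Qnat (k : nat) : (1 <= k)%N ->
  (k ^ k * k ^ (k - 1) <= k.+1 ^ k * (k - 1) ^ (k - 1))%N.
Proof.
case: k => // [[|j]] _; first by [].
rewrite (_ : (j.+2 - 1 = j.+1)%N); last by rewrite subn1.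
suff : (j.+2%:R : rat) ^+ j.+2 * j.+2%:R ^+ j.+1 <= j.+3%:R ^+ j.+2 * j.+1%:R ^+ j.+1.
  by rewrite -!natrX -!natrM ler_nat.
have eK1 : (j.+1%:R : rat) = j.+2%:R - 1 by rewrite [j.+2%:R]mulrS; ring.
have eK3 : (j.+3%:R : rat) = j.+2%:R + 1 by rewrite [j.+3%:R]mulrS; ring.
rewrite eK1 eK3.
set K : rat := (j.+2)%:R.
have K2 : 2 <= K by rewrite /K ler_nat.
have -> : K ^+ j.+2 * K ^+ j.+1 = K * (K * K) ^+ j.+1.
  by rewrite exprMn -!exprD -exprS; congr (_ ^+ _); lia.
have -> : (K + 1) ^+ j.+2 * (K - 1) ^+ j.+1 = (K + 1) * (K * K - 1) ^+ j.+1.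
  rewrite exprS -mulrA -exprMn; congr (_ * _ ^+ _); ring.
have B := @bern rat (K * K) j ltac:(nra).
have eJ : (j.+1%:R : rat) = K - 1 by rewrite eK1.
rewrite eJ exprS in B.
set T := (K * K) ^+ j in B *; set U := (K * K - 1) ^+ j.+1 in B *.
have T0 : 0 <= T by rewrite exprn_ge0 //; nra.
have U0 : 0 <= U by rewrite exprn_ge0 //; nra.
have H1 := ler_wpM2l (_ : 0 <= K + 1) B.
have E : (K + 1) * U - K * (K * K * T) = (K + 1) * (U + (K - 1) * T) - (K + 1) * (K * K * T) + T by ring.
rewrite [(K * K) ^+ j.+1]exprS -/T -subr_ge0 E addr_ge0 // subr_ge0 H1 //; lra.
Qed.

Lemma Cnat (k l : nat) : (1 <= l)%N -> (l <= k)%N ->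
  ((k - 1) ^ (k - 1) * l ^ (l - 1) <= k ^ (k - 1) * (l - 1) ^ (l - 1))%N.
Proof.
move=> l1 /subnK <-; elim: (k - l)%N => [|d IH]; first by rewrite add0n mulnC.
set k' := (d + l)%N in IH *.
have k1 : (1 <= k')%N by rewrite /k'; lia.
rewrite (_ : (d.+1 + l - 1 = k')%N); last by rewrite /k'; lia.
rewrite (_ : (d.+1 + l = k'.+1)%N); last by rewrite /k'; lia.
have P : (0 < (k' - 1) ^ (k' - 1))%N by rewrite expn_gt0; case: (k' - 1)%N.
rewrite -(leq_pmul2r P).
apply: (@leq_trans (k' ^ k' * (k' ^ (k' - 1) * (l - 1) ^ (l - 1)))).
  by rewrite mulnAC -mulnA leq_mul2l IH orbT.
rewrite mulnA (mulnAC (k'.+1 ^ k')%N).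
by rewrite leq_mul2r Qnat // orbT.
Qed.

Lemma Knat (k l : nat) : (1 <= l)%N -> (l <= k)%N ->
  (k * ((k - 1) ^ (k - 1) * l ^ l) <= k ^ k * l * (l - 1) ^ (l - 1))%N.
Proof.
move=> l1 lk; have := @Cnat k l l1 lk.
case: k lk => [|k] lk; first by lia.
case: l l1 lk => [|l] // _ _.
rewrite !subSS !subn0 => H.
rewrite (expnS k.+1 k) (expnS l.+1 l).
have -> : (k.+1 * (k ^ k * (l.+1 * l.+1 ^ l)) = (k.+1 * l.+1) * (k ^ k * l.+1 ^ l))%N by ring.
have -> : (k.+1 * k.+1 ^ k * l.+1 * l ^ l = (k.+1 * l.+1) * (k.+1 ^ k * l ^ l))%N by ring.
by rewrite leq_mul2l H orbT.
Qed.

Lemma final_ineq (R : realFieldType) (j : nat) (n d e N T D L0 L1 : R) :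
  0 < n -> 0 <= d -> d <= n - 1 -> 0 <= e -> e <= d -> e * n <= d * (n - 1) ->
  0 <= N -> N * n <= (n - 1) * (n - d) -> 0 <= L0 -> 0 <= L1 -> 0 < D ->
  (j.+3)%:R * n * (n - 1) ^+ j.+1 <= D ->
  T <= L0 * e ^+ j.+2 + L1 * d * N ^+ j.+1 ->
  T / D <= (j.+3%:R)^-1 * (L0 * (d / n) ^+ j.+2 + L1 * (d / n) * (1 - d / n) ^+ j.+1).
Proof.
move=> n0 d0 dn e0 ed en N0 Nn L00 L10 D0 HD HT.
rewrite ler_pdivrMr //.
have m0 : 0 < (j.+3%:R : R) by rewrite ltr0n.
set u := d / n.
have u0 : 0 <= u by rewrite /u divr_ge0 // ltW.
have u1 : 0 <= 1 - u.
  by rewrite subr_ge0 /u ler_pdivrMr // mul1r; lra.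
have Br : 0 <= L0 * u ^+ j.+2 + L1 * u * (1 - u) ^+ j.+1.
  have h1 : 0 <= u ^+ j.+2 by apply: exprn_ge0.
  have h2 : 0 <= (1 - u) ^+ j.+1 by apply: exprn_ge0.
  by apply: addr_ge0; [apply: mulr_ge0 | apply: mulr_ge0 => //; apply: mulr_ge0].
have B0 : 0 <= (j.+3%:R)^-1 * (L0 * u ^+ j.+2 + L1 * u * (1 - u) ^+ j.+1).
  by apply: mulr_ge0 => //; rewrite invr_ge0 ltW.
apply: le_trans HT _.
apply: le_trans (ler_wpM2l B0 HD).
have idt : forall U : R, (j.+3%:R)^-1 * (L0 * U ^+ j.+2 + L1 * U * (1 - U) ^+ j.+1) *
   (j.+3%:R * n * (n - 1) ^+ j.+1) =
   L0 * (U * n) * (U * (n - 1)) ^+ j.+1 + L1 * (U * n) * ((1 - U) * (n - 1)) ^+ j.+1.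
  move=> U; rewrite !exprMn [U ^+ j.+2]exprS.
  set A := U ^+ j.+1; set Bq := (1 - U) ^+ j.+1; set C := (n - 1) ^+ j.+1.
  have h : (j.+3%:R : R) != 0 by rewrite gt_eqF.
  field; rewrite gt_eqF //; have := ler0n R j; lra.
rewrite idt.
have un : u * n = d by rewrite /u divfK // gt_eqF.
rewrite un.
have n1 : 0 <= n - 1 by lra.
apply: lerD.
  rewrite exprS mulrA; apply: ler_pM.
  - by apply: mulr_ge0.
  - by apply: exprn_ge0.
  - by apply: ler_wpM2l.
  have uN : 0 <= u * (n - 1) by apply: mulr_ge0.
  rewrite lerXn2r ?nnegrE //.
  by rewrite /u mulrAC ler_pdivlMr.
apply: ler_wpM2l; first by apply: mulr_ge0.
have uN : 0 <= (1 - u) * (n - 1) by apply: mulr_ge0.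
rewrite lerXn2r ?nnegrE //.
have -> : (1 - u) * (n - 1) = (n - 1) * (n - d) / n.
  by rewrite /u; field; rewrite gt_eqF.
by rewrite ler_pdivlMr.
Qed.

Lemma term_bound (R : realFieldType) (p q : nat) (x y N : nat) : (0 < p)%N -> (x + y <= N)%N ->
  ((x ^ p * y ^ q)%N%:R : R) <=
  (p ^ p * q ^ q)%N%:R / ((p + q) ^ (p + q))%N%:R * (N%:R) ^+ (p + q).
Proof.
move=> p0 xyN; have H := AM q p0 (ler0n R x) (ler0n R y).
rewrite -!natrX -natrM in H; apply: le_trans H _.
apply: ler_wpM2l; first by apply: divr_ge0; apply: ler0n.
rewrite lerXn2r ?nnegrE ?addr_ge0 ?ler0n //.
by rewrite -natrD ler_nat.
Qed.

Lemma T_real (R : realFieldType) (V : finType) (arc : rel V) k l (v : V) :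
  irreflexive arc -> (3 <= k)%N -> (1 <= l)%N -> (l <= k)%N ->
  (#|[set f : {ffun 'I_(k + l).+1 -> V} | is_star_copy arc f && (v \in codom f)]|%:R : R) <=
  lambda0 R k l * ((#|[set u | adjacent arc v u]| - 1)%N%:R) ^+ (k + l) +
  lambda1 R k l * #|[set u | adjacent arc v u]|%:R * (#|nadj arc v|%:R) ^+ (k + l - 1).
Proof.
move=> irr k3 l1 lk.
have HT := T_nat arc k l v; rewrite -(ler_nat R) !natrD in HT.
apply: le_trans HT _.
set a := #|outS arc v|; set b := #|inS arc v|; set d := #|[set u | adjacent arc v u]|.
set N := #|nadj arc v|.
have abd : (a + b <= d)%N by apply: out_in_adj.
have L1ge : 0 <= lambda1 R k l by apply: divr_ge0; apply: ler0n.
have NX : 0 <= (N%:R : R) ^+ (k + l - 1) by apply: exprn_ge0; apply: ler0n.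
rewrite -addrA; apply: lerD.
  case: (posnP a) => [a0|a0].
    rewrite a0 ffact_small ?mul0n; last by lia.
    by apply: mulr_ge0; [apply: divr_ge0; apply: ler0n | apply: exprn_ge0; apply: ler0n].
  have h1 : (a ^_ k * b ^_ l <= (a - 1) ^ k * b ^ l)%N.
    apply: leq_mul; last exact: ffact_le.
    by rewrite -(subnK k3) addn3; apply: ffact_bound.
  rewrite -(ler_nat R) in h1; apply: le_trans h1 _.
  apply: term_bound; first by lia.
  by lia.
have e1 : (k.-1 + l = k + l - 1)%N by lia.
have e2 : (k + l.-1 = k + l - 1)%N by lia.
apply: (@le_trans _ _ ((b%:R + a%:R) * (lambda1 R k l * (N%:R) ^+ (k + l - 1)))); last first.
  have -> : lambda1 R k l * d%:R * N%:R ^+ (k + l - 1) = d%:R * (lambda1 R k l * N%:R ^+ (k + l - 1)) by ring.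
  by apply: ler_wpM2r; [apply: mulr_ge0 | rewrite -natrD ler_nat addnC].
rewrite mulrDl; apply: lerD.
  rewrite natrM natr_sum.
  set lamA : R := ((k.-1 ^ k.-1 * l ^ l)%N%:R / ((k + l - 1) ^ (k + l - 1))%N%:R).
  apply: (@le_trans _ _ (k%:R * ((lamA * N%:R ^+ (k + l - 1)) *+ b))).
    apply: ler_wpM2l; first by apply: ler0n.
    rewrite -sumr_const; apply: ler_sum => c _.
    have := @term_bound R k.-1 l _ _ N (_ : (0 < k.-1)%N) (nadj_split arc v c).
    by rewrite /lamA e1; apply; lia.
  have -> : k%:R * (lamA * N%:R ^+ (k + l - 1) *+ b) = b%:R * ((k%:R * lamA) * N%:R ^+ (k + l - 1)).
    by rewrite -mulr_natr; ring.
  apply: ler_wpM2l; first exact: ler0n.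
  apply: ler_wpM2r => //.
  rewrite /lamA /lambda1 mulrA -natrM; apply: ler_wpM2r; first by rewrite invr_ge0 ler0n.
  by rewrite ler_nat -subn1; exact: Knat.
rewrite natrM natr_sum.
set lamB : R := ((k ^ k * l.-1 ^ l.-1)%N%:R / ((k + l - 1) ^ (k + l - 1))%N%:R).
apply: (@le_trans _ _ (l%:R * ((lamB * N%:R ^+ (k + l - 1)) *+ a))).
  apply: ler_wpM2l; first by apply: ler0n.
  rewrite -sumr_const; apply: ler_sum => c _.
  have := @term_bound R k l.-1 _ _ N (_ : (0 < k)%N) (nadj_split arc v c).
  by rewrite /lamB e2; apply; lia.
have -> : l%:R * (lamB * N%:R ^+ (k + l - 1) *+ a) = a%:R * ((l%:R * lamB) * N%:R ^+ (k + l - 1)).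
  by rewrite -mulr_natr; ring.
apply: ler_wpM2l; first exact: ler0n.
apply: ler_wpM2r => //.
rewrite /lamB /lambda1 mulrA -natrM; apply: ler_wpM2r; first by rewrite invr_ge0 ler0n.
by rewrite ler_nat -subn1 mulnA (mulnC l).

Qed.

Theorem claim4p1 (R : realFieldType) (k l : nat) (V : finType) (arc : rel V)
    (Hloop : irreflexive arc) (Hlk : (l <= k)%N) (Hl : (1 <= l)%N)
    (Hm : (6 <= k + l)%N) (v : V) :
  s_star R arc k l v <=
    ((k + l).+1%:R)^-1 *
      (lambda0 R k l * (rho R arc v) ^+ (k + l)
       + lambda1 R k l * rho R arc v * (1 - rho R arc v) ^+ (k + l - 1)).
Proof.
have k3 : (3 <= k)%N by lia.
have HT := T_real R v Hloop k3 Hl Hlk.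
rewrite /s_star /rho.
set T := #|[set f | _ && _]| in HT *.
set d := #|[set u | adjacent arc v u]| in HT *.
set N := #|nadj arc v| in HT *.
have Hcard := card_adj_nadj v Hloop; rewrite -/d -/N in Hcard.
set n := #|V| in Hcard *.
have HD := card_codom 'I_(k + l).+1 v. rewrite card_ord -/n in HD.
set D := #|[set f : {ffun 'I_(k + l).+1 -> V} | v \in codom f]| in HD *.
have [j Hj] : exists j, (k + l = j.+2)%N by exists (k + l - 2)%N; lia.
rewrite Hj (_ : (j.+2 - 1 = j.+1)%N) ?subn1 // in HT HD *.
have n1 : (1 <= n)%N by lia.
have D0 : (0 < D)%N.
  rewrite /D card_gt0; apply/set0Pn; exists [ffun=> v]; rewrite inE.
  by apply/codomP; exists ord0; rewrite ffunE.
have nR : (n%:R : R) = (n.-1)%:R + 1 by rewrite natr1 prednK.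
have n1R : (n%:R : R) - 1 = n.-1%:R by rewrite nR addrK.
apply: (final_ineq (e := (d.-1)%:R) (N := N%:R)).
- by rewrite ltr0n.
- exact: ler0n.
- by rewrite n1R ler_nat; lia.
- exact: ler0n.
- by rewrite ler_nat; lia.
- rewrite n1R -!natrM ler_nat.
  have dn : (d < n)%N by rewrite -Hcard; lia.
  clear -dn; case: d dn => [|d'] //; case: n => [|n'] //= dn; nia.
- exact: ler0n.
- have dn : (d <= n)%N by rewrite -Hcard; lia.
  rewrite n1R -natrB // -!natrM ler_nat -Hcard.
  clear; rewrite /= subSn ?leq_addr // addKn; nia.
- by apply: divr_ge0; apply: ler0n.
- by apply: divr_ge0; apply: ler0n.
- by rewrite ltr0n.
- rewrite n1R HD natrB; last by rewrite leq_exp2r //; lia.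
  rewrite !natrX nR.
  by apply: geomlb; exact: ler0n.
- exact: HT.
Qed.
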